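(* Let $(\mathbf{P}_t)_{t\ge0}$ be a continuous-time Markov process on a countable state space $\mathcal{S}$ with stable conservative $Q$-matrix, and suppose it is reversible with respect to a positive measure $\mu$ on $\mathcal{S}$ (i.e. $\mu_ip_{ij}(t)=\mu_jp_{ji}(t)$ for all $i,j,t$). Then it is initial-state identifiable: for every $t\in[0,\infty)$, the rows $\mathbf{p}^i(t)$, $i\in\mathcal{S}$, of $\mathbf{P}_t$ are pairwise distinct.
   Context: $\mathbf{P}_t=(p_{ij}(t))$ is the transition matrix at time $t$ and $\mathbf{p}^i(t)=(p_{i1}(t),p_{i2}(t),\dots)$ its $i$-th row. Stable conservative $Q$-matrix: $q_{ij}=p'_{ij}(0)\in[0,\infty)$ for $i\ne j$ and $q_i=-q_{ii}=\sum_{j\ne i}q_{ij}<\infty$. *)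

(* Defs.v *)
From Stdlib Require Import Reals List.
Import ListNotations.
Open Scope R_scope.

Definition list_sumR (l : list R) : R := fold_right Rplus 0 l.

(* All sums in
   the statement are of nonnegative terms, so this is the usual sum over a
   countable index set (with value in [0,oo), finiteness being asserted). *)
Definition sums_on {S : Type} (P : S -> Prop) (f : S -> R) (s : R) : Prop :=
  is_lub (fun x => exists L : list S,
             NoDup L /\ Forall P L /\ x = list_sumR (map f L)) s.

Definition sums {S : Type} (f : S -> R) (s : R) : Prop :=
  sums_on (fun _ => True) f s.

Definition countable (S : Type) : Prop :=
  exists enc : S -> nat, forall x y, enc x = enc y -> x = y.

Definition transition_function {S : Type} (p : R -> S -> S -> R) : Prop :=
  (forall t i j, 0 <= t -> 0 <= p t i j) /\
  (forall t i, 0 <= t -> sums (fun j => p t i j) 1) /\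
  (forall i, p 0 i i = 1) /\
  (forall i j, i <> j -> p 0 i j = 0) /\
  (forall s t i j, 0 <= s -> 0 <= t ->
      sums (fun k => p s i k * p t k j) (p (s + t) i j)).

Definition right_deriv0 (g : R -> R) (l : R) : Prop :=
  forall eps, 0 < eps -> exists delta, 0 < delta /\
    forall h, 0 < h < delta -> Rabs ((g h - g 0) / h - l) < eps.

Definition stable_conservative_Qmatrix {S : Type}
    (p : R -> S -> S -> R) (q : S -> S -> R) : Prop :=
  (forall i j, right_deriv0 (fun t => p t i j) (q i j)) /\
  (forall i j, i <> j -> 0 <= q i j) /\
  (forall i, sums_on (fun j => j <> i) (fun j => q i j) (- q i i)).

Definition reversible {S : Type} (p : R -> S -> S -> R) (mu : S -> R) : Prop :=
  (forall i, 0 < mu i) /\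
  (forall t i j, 0 <= t -> mu i * p t i j = mu j * p t j i).

(* Main.v *)
Require Import Defs.
From Stdlib Require Import Reals Lra List Classical.
Import ListNotations.
Open Scope R_scope.

Lemma sumR_lin {S : Type} (a b c : R) (f g h : S -> R) (L : list S) :
  list_sumR (map (fun k => a * f k + b * g k + c * h k) L) =
  a * list_sumR (map f L) + b * list_sumR (map g L) + c * list_sumR (map h L).
Proof. induction L; simpl; [ring | rewrite IHL; ring]. Qed.

Lemma sumR_nonneg {S : Type} (f : S -> R) (L : list S) :
  (forall x, 0 <= f x) -> 0 <= list_sumR (map f L).
Proof. intros H; induction L; simpl; [lra | specialize (H a); lra]. Qed.

Lemma sumR_ge_elem {S : Type} (f : S -> R) (L : list S) k :
  (forall x, 0 <= f x) -> In k L -> f k <= list_sumR (map f L).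
Proof.
  intros H; induction L as [|a L IH]; simpl; [tauto|].
  intros [->|Hin].
  - pose proof (sumR_nonneg f L H); lra.
  - specialize (IH Hin); specialize (H a); lra.
Qed.

Lemma sums_ub {S : Type} (f : S -> R) s L :
  sums f s -> NoDup L -> list_sumR (map f L) <= s.
Proof.
  intros [Hub _] HL. apply Hub. exists L. split; [auto|split; [|auto]].
  apply Forall_forall; auto.
Qed.

Lemma sums_approx {S : Type} (f : S -> R) s eps :
  sums f s -> 0 < eps -> exists L, NoDup L /\ s - eps < list_sumR (map f L).
Proof.
  intros [Hub Hlub] He. apply NNPP; intro Hn.
  assert (s <= s - eps); [|lra].
  apply Hlub. intros x [L [HL [_ ->]]].
  apply Rnot_lt_le. intro Hc. apply Hn. exists L; auto.
Qed.

Section Main.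
Context {S : Type} (p : R -> S -> S -> R) (mu : S -> R).
Hypothesis tf : transition_function p.
Hypothesis rev : reversible p mu.

Lemma halve s i j : 0 <= s ->
  (forall k, p (s + s) i k = p (s + s) j k) -> forall k, p s i k = p s j k.
Proof.
  intros Hs Heq k.
  destruct tf as [Hnn [_ [_ [_ HCK]]]].
  destruct rev as [Hmu Hrev].
  set (A := fun k => p s i k * p s k i).
  set (B := fun k => p s j k * p s k j).
  set (C := fun k => p s i k * p s k j).
  assert (SA : sums A (p (s+s) i i)) by (apply HCK; auto).
  assert (SB : sums B (p (s+s) j j)) by (apply HCK; auto).
  assert (SC : sums C (p (s+s) i j)) by (apply HCK; auto).
  set (c := p (s+s) i j).
  pose proof (Hmu i) as mi. pose proof (Hmu j) as mj.
  assert (E1 : p (s+s) i i = mu i * c / mu j).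
  { rewrite (Heq i). pose proof (Hrev (s+s) j i ltac:(lra)).
    unfold c. field_simplify; [|lra]. rewrite <- H. field. lra. }
  assert (E2 : p (s+s) j j = c) by (unfold c; rewrite Heq; reflexivity).
  set (F := fun k => /mu i * A k + (-2 / mu j) * C k + / mu j * B k).
  assert (HF : forall k, F k = (p s i k - p s j k)^2 / mu k).
  { intro x. unfold F, A, B, C. pose proof (Hmu x) as mx.
    pose proof (Hrev s x i Hs) as r1. pose proof (Hrev s x j Hs) as r2.
    assert (p s x i = mu i * p s i x / mu x) as -> by (rewrite <- r1; field; lra).
    assert (p s x j = mu j * p s j x / mu x) as -> by (rewrite <- r2; field; lra).
    field. lra. }
  assert (HFnn : forall x, 0 <= F x).
  { intro x. rewrite HF. pose proof (Hmu x). apply Rmult_le_pos.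
    - apply pow2_ge_0.
    - left; apply Rinv_0_lt_compat; lra. }
  destruct (Req_dec (p s i k) (p s j k)) as [|Hne]; auto. exfalso.
  set (d := (p s i k - p s j k)^2 / mu k).
  assert (Hd : 0 < d).
  { unfold d. pose proof (Hmu k). apply Rdiv_lt_0_compat; [|lra].
    assert (p s i k - p s j k <> 0) by lra. nra. }
  destruct (sums_approx C c (d * mu j / 4) SC ltac:(nra)) as [L [HL HLc]].
  assert (Cnn : forall x, 0 <= C x).
  { intro x; unfold C; apply Rmult_le_pos; apply Hnn; auto. }
  assert (exists L', NoDup L' /\ In k L' /\
           list_sumR (map C L) <= list_sumR (map C L')) as [L' [HL' [Hk HC']]].
  { destruct (classic (In k L)).
    - exists L; repeat split; auto; lra.
    - exists (k :: L); repeat split; auto.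
      + constructor; auto.
      + left; auto.
      + simpl. specialize (Cnn k). lra. }
  pose proof (sumR_ge_elem F L' k HFnn Hk) as Hge.
  unfold F at 2 in Hge. rewrite sumR_lin in Hge.
  pose proof (sums_ub A _ L' SA HL') as uA.
  pose proof (sums_ub B _ L' SB HL') as uB.
  rewrite E1 in uA. rewrite E2 in uB.
  rewrite HF in Hge. fold d in Hge.
  set (sA := list_sumR (map A L')) in *.
  set (sB := list_sumR (map B L')) in *.
  set (sC := list_sumR (map C L')) in *.
  assert (/ mu i * sA <= c / mu j).
  { apply Rmult_le_reg_l with (mu i); auto.
    rewrite <- Rmult_assoc, Rinv_r by lra. 
    replace (mu i * (c / mu j)) with (mu i * c / mu j) by (field; lra). lra. }
  assert (/ mu j * sB <= c / mu j).
  { unfold Rdiv. rewrite (Rmult_comm c). apply Rmult_le_compat_l; auto.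
    left; apply Rinv_0_lt_compat; lra. }
  assert (-2 / mu j * sC <= -2 / mu j * (c - d * mu j / 4)).
  { unfold Rdiv. rewrite !Rmult_assoc. apply Rmult_le_compat_neg_l; [lra|].
    apply Rmult_le_compat_l; [left; apply Rinv_0_lt_compat; lra| lra]. }
  assert (-2 / mu j * (c - d * mu j / 4) = -2 * c / mu j + d / 2) by (field; lra).
  assert (c / mu j + -2 * c / mu j + c / mu j = 0) by (field; lra).
  lra.
Qed.

End Main.

Lemma near0 (g : R -> R) l : right_deriv0 g l ->
  exists delta, 0 < delta /\ forall h, 0 < h < delta -> Rabs (g h - g 0) <= 1/4.
Proof.
  intros Hd. destruct (Hd 1 ltac:(lra)) as [d0 [Hd0 H]].
  pose proof (Rabs_pos l).
  exists (Rmin d0 (1 / (4 * (1 + Rabs l)))). split.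
  - apply Rmin_glb_lt; auto. apply Rdiv_lt_0_compat; lra.
  - intros h [h0 hd]. pose proof (Rmin_l d0 (1 / (4 * (1 + Rabs l)))).
    pose proof (Rmin_r d0 (1 / (4 * (1 + Rabs l)))).
    specialize (H h ltac:(lra)).
    set (u := (g h - g 0) / h) in H.
    assert (g h - g 0 = u * h) as -> by (unfold u; field; lra).
    rewrite Rabs_mult, (Rabs_right h) by lra.
    assert (Rabs u < 1 + Rabs l).
    { pose proof (Rabs_triang (u - l) l) as Tr. replace (u - l + l) with u in Tr by ring. lra. }
    assert (h * (4 * (1 + Rabs l)) <= 1).
    { assert (h <= 1 / (4 * (1 + Rabs l))) by lra.
      assert (Hh4 : h <= 1 / (4 * (1 + Rabs l))) by lra.
      apply Rmult_le_compat_r with (r := 4 * (1 + Rabs l)) in Hh4; [|lra].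
      replace (1 / (4 * (1 + Rabs l)) * (4 * (1 + Rabs l))) with 1 in Hh4 by (field; lra).
      lra. }
    pose proof (Rabs_pos u).
    assert (Rabs u * h <= (1 + Rabs l) * h) by (apply Rmult_le_compat_r; lra).
    lra.
Qed.

Theorem mainTheorem11 (S : Type) (p : R -> S -> S -> R) (q : S -> S -> R)
    (mu : S -> R) :
  countable S ->
  transition_function p ->
  stable_conservative_Qmatrix p q ->
  reversible p mu ->
  forall t, 0 <= t -> forall i j : S, i <> j ->
    (fun k => p t i k) <> (fun k => p t j k).
Proof.
  intros _ tf [Hq _] rev t Ht i j Hij Heq.
  assert (Hrow : forall k, p t i k = p t j k)
    by (intro k; exact (f_equal (fun f => f k) Heq)).
  destruct tf as [Hnn [Hsum [H0d [H0o HCK]]]].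
  destruct (near0 _ _ (Hq i i)) as [d1 [Hd1 N1]].
  destruct (near0 _ _ (Hq j i)) as [d2 [Hd2 N2]].
  rewrite H0d in N1. rewrite (H0o j i (not_eq_sym Hij)) in N2.
  destruct (Rle_lt_or_eq_dec 0 t Ht) as [Htp|Ht0].
  2:{ subst t. specialize (Hrow i). rewrite H0d, (H0o j i (not_eq_sym Hij)) in Hrow. lra. }
  assert (Hall : forall n, forall k, p (t / 2^n) i k = p (t / 2^n) j k).
  { induction n as [|n IH].
    - simpl. intro k. replace (t/1) with t by field. auto.
    - apply (halve p mu (conj Hnn (conj Hsum (conj H0d (conj H0o HCK)))) rev).
      + apply Rlt_le, Rdiv_lt_0_compat; auto. apply pow_lt; lra.
      + replace (t / 2 ^ Datatypes.S n + t / 2 ^ Datatypes.S n) with (t / 2^n); auto.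
        simpl. field. apply pow_nonzero; lra. }
  set (d := Rmin d1 d2).
  assert (Hd : 0 < d) by (apply Rmin_glb_lt; auto).
  destruct (Pow_x_infinity 2 ltac:(rewrite Rabs_right; lra) (2 * t / d)) as [N HN].
  specialize (HN N (le_n N)). rewrite Rabs_right in HN by (apply Rle_ge, pow_le; lra).
  assert (P2 : 0 < 2 ^ N) by (apply pow_lt; lra).
  set (h := t / 2 ^ N).
  assert (Hh : 0 < h) by (apply Rdiv_lt_0_compat; auto).
  assert (Hhd : h < d).
  { unfold h. apply Rge_le in HN. apply Rmult_le_compat_r with (r := d) in HN; [|lra].
    replace (2 * t / d * d) with (2 * t) in HN by (field; lra).
    apply (Rmult_lt_reg_r (2 ^ N)); auto. unfold Rdiv.
    rewrite Rmult_assoc, Rinv_l by lra. lra. }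
  assert (d <= d1) by (unfold d; apply Rmin_l).
  assert (d <= d2) by (unfold d; apply Rmin_r).
  specialize (N1 h ltac:(lra)). specialize (N2 h ltac:(lra)).
  specialize (Hall N i). fold h in Hall. rewrite Hall in N1.
  rewrite Rminus_0_r in N2.
  revert N1 N2. unfold Rabs. destruct Rcase_abs; destruct Rcase_abs; lra.
Qed.
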